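(* Let $N_d \le N_m$ be positive integers, let $\Phi_{\mathbf{y}} \in \mathbb{C}^{N_m \times N_m}$ be Hermitian positive definite with largest and smallest eigenvalues $\lambda_{max}$ and $\lambda_{min}$, let $\mathbf{g} \in \mathbb{C}^{N_m}$ be nonzero, and let $\mathbf{\Psi} \in \mathbb{C}^{N_d \times N_m}$. Let $\delta \in (0,1)$ be such that (i) every eigenvalue of $\mathbf{\Psi}\mathbf{\Psi}^H$ lies in $[1-\delta,\,1+\delta]$, and (ii) $(1-\delta)\|\mathbf{g}\|^2 \le \|\mathbf{\Psi}\mathbf{g}\|^2 \le (1+\delta)\|\mathbf{g}\|^2$. Define the full-complexity MVDR output power $p_{MVDR} = \left(\mathbf{g}^H \Phi_{\mathbf{y}}^{-1}\mathbf{g}\right)^{-1}$, the compressed MVDR output power $p_{CMVDR} = \left(\mathbf{g}^H \mathbf{\Psi}^H (\mathbf{\Psi}\Phi_{\mathbf{y}}\mathbf{\Psi}^H)^{-1}\mathbf{\Psi}\mathbf{g}\right)^{-1}$, and the regret $R = p_{CMVDR} - p_{MVDR}$. Then $$\frac{\lambda_{min}}{\|\mathbf{g}\|^2} \le p_{MVDR} \le \frac{\lambda_{max}}{\|\mathbf{g}\|^2},\qquad \frac{(1-\delta)\lambda_{min}}{(1+\delta)\|\mathbf{g}\|^2} \le p_{CMVDR} \le \frac{(1+\delta)\lambda_{max}}{(1-\delta)\|\mathbf{g}\|^2},$$ and consequently $$\frac{(1-\delta)\lambda_{min}}{(1+\delta)\|\mathbf{g}\|^2} - \frac{\lambda_{max}}{\|\mathbf{g}\|^2}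 \le R \le \frac{(1+\delta)\lambda_{max}}{(1-\delta)\|\mathbf{g}\|^2} - \frac{\lambda_{min}}{\|\mathbf{g}\|^2}.$$
   Context: $\Phi_{\mathbf{y}}$ models the correlation matrix of the $N_m$ microphone signals, $\mathbf{g}$ is the steering vector to the desired source, and $\mathbf{\Psi}$ is a (random) projection to $N_d$ dimensions; $p_{MVDR}$ and $p_{CMVDR}$ are the output powers of the minimum variance distortionless response beamformer in the full sensor space and in the projected space respectively. Hypotheses (i) and (ii) are the consequences of the restricted isometry property with constant $\delta$ that the paper uses. $\|\cdot\|$ is the Euclidean norm and $^H$ the conjugate transpose. *)

(* Defs.v *)
From HB Require Import structures.
From mathcomp Require Import all_boot all_order all_algebra.
Set Implicit Arguments. Unset Strict Implicit. Unset Printing Implicit Defensive.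
Import Order.TTheory GRing.Theory Num.Theory.
Local Open Scope ring_scope.

(* Complex scalars are modelled by an arbitrary numClosedFieldType C
   (e.g. algC, or complex R for a real closed field R); x^* is conjugation. *)

Definition mxH (C : numClosedFieldType) (m n : nat) (A : 'M[C]_(m, n)) : 'M[C]_(n, m) :=
  \matrix_(i, j) (A j i)^*.

Definition mx_hermitian (C : numClosedFieldType) (n : nat) (A : 'M[C]_n) : Prop :=
  mxH A = A.

Definition mx_posdef (C : numClosedFieldType) (n : nat) (A : 'M[C]_n) : Prop :=
  forall v : 'cV[C]_n, v != 0 -> 0 < (mxH v *m A *m v) 0 0.

Definition sqnorm (C : numClosedFieldType) (n : nat) (v : 'cV[C]_n) : C :=
  (mxH v *m v) 0 0.

Definition p_MVDR (C : numClosedFieldType) (n : nat) (Phi : 'M[C]_n) (g : 'cV[C]_n) : C :=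
  ((mxH g *m invmx Phi *m g) 0 0)^-1.

Definition p_CMVDR (C : numClosedFieldType) (nd nm : nat) (Phi : 'M[C]_nm)
    (Psi : 'M[C]_(nd, nm)) (g : 'cV[C]_nm) : C :=
  ((mxH g *m mxH Psi *m invmx (Psi *m Phi *m mxH Psi) *m Psi *m g) 0 0)^-1.

(* Main.v *)
Require Import Defs.
From HB Require Import structures.
From mathcomp Require Import all_boot all_order all_algebra.
Import Order.TTheory GRing.Theory Num.Theory Num.Def.
Set Implicit Arguments. Unset Strict Implicit. Unset Printing Implicit Defensive.
Local Open Scope ring_scope.

Section Aux.
Variable C : numClosedFieldType.

Definition quad n (A : 'M[C]_n) (v : 'cV[C]_n) : C := (mxH v *m A *m v) 0 0.

Lemma mxHE m n (A : 'M[C]_(m, n)) : mxH A = map_mx conjC (A^T).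
Proof. by apply/matrixP => i j; rewrite !mxE. Qed.

Lemma mxH_mul m n p (A : 'M[C]_(m, n)) (B : 'M[C]_(n, p)) :
  mxH (A *m B) = mxH B *m mxH A.
Proof. by rewrite !mxHE trmx_mul map_mxM. Qed.

Lemma mxHK m n (A : 'M[C]_(m, n)) : mxH (mxH A) = A.
Proof. by apply/matrixP => i j; rewrite !mxE conjCK. Qed.

Lemma mxHZ m n (a : C) (A : 'M[C]_(m, n)) : mxH (a *: A) = a^* *: mxH A.
Proof. by apply/matrixP => i j; rewrite !mxE rmorphM. Qed.

Lemma sqnormE n (v : 'cV[C]_n) : sqnorm v = \sum_i (v i 0)^* * v i 0.
Proof. by rewrite /sqnorm mxE; apply: eq_bigr => i _; rewrite !mxE. Qed.

Lemma sqnorm_ge0 n (v : 'cV[C]_n) : 0 <= sqnorm v.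
Proof. by rewrite sqnormE sumr_ge0 // => i _; rewrite mulrC mul_conjC_ge0. Qed.

Lemma sqnorm_gt0 n (v : 'cV[C]_n) : v != 0 -> 0 < sqnorm v.
Proof.
move=> vn0; have [i vi] : exists i, v i 0 != 0.
  apply/existsP; apply: contraNT vn0; rewrite negb_exists => /forallP H.
  by apply/eqP/matrixP => i j; rewrite ord1 mxE; move: (H i); rewrite negbK => /eqP.
rewrite sqnormE (bigD1 i) //=; apply: ltr_wpDr.
  by rewrite sumr_ge0 // => k _; rewrite mulrC mul_conjC_ge0.
by rewrite mulrC mul_conjC_gt0.
Qed.

Lemma eigen_quad n (A : 'M[C]_n) (u : 'rV[C]_n) e :
  mxH A = A -> u *m A = e *: u -> quad A (mxH u) = e * sqnorm (mxH u).
Proof.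
move=> _ uA; rewrite /quad /sqnorm mxHK uA -scalemxAl mxE; done.
Qed.


Lemma herm_normal n (A : 'M[C]_n) : mxH A = A -> A \is normalmx.
Proof. by move=> hA; apply/normalmxP; rewrite -mxHE hA. Qed.

Lemma rayleigh n (A : 'M[C]_n) (a b : C) : mxH A = A ->
  (forall e, eigenvalue A e -> a <= e <= b) ->
  forall v, a * sqnorm v <= quad A v <= b * sqnorm v.
Proof.
move=> hA hE v.
have /orthomx_spectralP Aeq := herm_normal hA.
set P := spectralmx A in Aeq; set d := spectral_diag A in Aeq.
have Pu : P \is unitarymx by apply: spectral_unitarymx.
have Punit : P \in unitmx by apply: spectral_unit.
have PH : invmx P = mxH P by rewrite invmx_unitary // mxHE.
have Ed : forall i, eigenvalue A (d 0 i).
  move=> i; apply/eigenvalueP; exists (row i P).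
    rewrite -row_mul Aeq !mulmxA mulmxV // mul1mx.
    by rewrite row_mul row_diag_mx -scalemxAl -rowE.
  have rfP : row_free P by rewrite row_free_unit.
  rewrite rowE (mulmx_free_eq0 _ rfP).
  apply/eqP => /matrixP /(_ 0 i); rewrite !mxE !eqxx /=.
  by move/eqP; rewrite oner_eq0.
set w := P *m v.
have sqE : sqnorm v = sqnorm w.
  rewrite /sqnorm /w mxH_mul -PH mulmxA -(mulmxA (mxH v)) mulVmx //.
  by rewrite mulmx1.
have qE : quad A v = \sum_i (w i 0)^* * d 0 i * w i 0.
  rewrite /quad {1}Aeq PH !mulmxA -mxH_mul -/w -(mulmxA _ P v) -/w.
  rewrite mul_mx_diag mxE; apply: eq_bigr => i _; rewrite !mxE.
  done.
have tE : forall i, (w i 0)^* * d 0 i * w i 0 = d 0 i * ((w i 0)^* * w i 0).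
  by move=> i; rewrite mulrAC mulrC.
have pos : forall i, 0 <= (w i 0)^* * w i 0 by move=> i; rewrite mulrC mul_conjC_ge0.
rewrite sqE qE sqnormE !mulr_sumr; apply/andP; split; apply: ler_sum => i _;
  rewrite tE; apply: ler_wpM2r => //; by case/andP: (hE _ (Ed i)).
Qed.

Lemma mxH_eq0 m n (A : 'M[C]_(m, n)) : (mxH A == 0) = (A == 0).
Proof.
apply/idP/idP => /eqP H; apply/eqP; last by rewrite H; apply/matrixP=> i j; rewrite !mxE conjC0.
by rewrite -[A]mxHK H; apply/matrixP=> i j; rewrite !mxE conjC0.
Qed.

Lemma eig_from_quad n (A : 'M[C]_n) (c D : C) : mxH A = A ->
  (forall v, c * sqnorm v <= quad A v <= D * sqnorm v) ->
  forall e, eigenvalue A e -> c <= e <= D.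
Proof.
move=> hA hq e /eigenvalueP [u uA un0].
have vn0 : mxH u != 0 by rewrite mxH_eq0.
have s0 := sqnorm_gt0 vn0.
have := hq (mxH u); rewrite (eigen_quad hA uA) !ler_pM2r //.
Qed.

Lemma eig_pos n (A : 'M[C]_n) e : mxH A = A -> mx_posdef A -> eigenvalue A e -> 0 < e.
Proof.
move=> hA pd /eigenvalueP [u uA un0].
have vn0 : mxH u != 0 by rewrite mxH_eq0.
have s0 := sqnorm_gt0 vn0.
have := pd _ vn0; rewrite -/(quad A (mxH u)) (eigen_quad hA uA) pmulr_lgt0 //.
Qed.

Lemma inv_spec n (A : 'M[C]_n) a b : mxH A = A -> 0 < a ->
  (forall e, eigenvalue A e -> a <= e <= b) ->
  [/\ A \in unitmx, mxH (invmx A) = invmx A &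
      forall e, eigenvalue (invmx A) e -> b^-1 <= e <= a^-1].
Proof.
move=> hA a0 hE.
have Au : A \in unitmx.
  apply: contraT => nu.
  have : eigenvalue A 0.
    rewrite /eigenvalue /eigenspace (_ : 0%:M = 0) ?subr0; last first.
      by apply/matrixP=> i j; rewrite !mxE mul0rn.
    by rewrite kermx_eq0 row_free_unit.
  by move/hE => /andP [h _]; move: (lt_le_trans a0 h); rewrite ltxx.
split => //.
  by rewrite mxHE trmx_inv map_invmx -mxHE hA.
move=> e /eigenvalueP [u uA un0].
have e0 : e != 0.
  apply: contra un0 => /eqP e0; move: uA; rewrite e0 scale0r => uA.
  by rewrite -[u](mulmxKV Au) uA mul0mx.
have uA' : u *m A = e^-1 *: u.
  have := congr1 (mulmx^~ A) uA; rewrite /= mulmxKV // -scalemxAl => H.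
  by rewrite {2}H scalerA mulVf // scale1r.
have /andP [h1 h2] : a <= e^-1 <= b by apply: hE; apply/eigenvalueP; exists u.
have ei0 : 0 < e^-1 := lt_le_trans a0 h1.
have e0' : 0 < e by rewrite -invr_gt0.
have b0 : 0 < b := lt_le_trans ei0 h2.
apply/andP; split.
  by rewrite -[e]invrK lef_pV2 // posrE ?invr_gt0.
by rewrite -[e]invrK lef_pV2 // posrE ?invr_gt0.
Qed.

Lemma inv_bounds (x lo hi : C) : 0 < lo -> lo <= x <= hi -> hi^-1 <= x^-1 <= lo^-1.
Proof.
move=> l0 /andP [h1 h2]; have x0 := lt_le_trans l0 h1; have h0 := lt_le_trans x0 h2.
by rewrite !lef_pV2 ?posrE // h1 h2.
Qed.
End Aux.

Theorem mainTheorem1 (C : numClosedFieldType) (Nd Nm : nat)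
    (Phi : 'M[C]_Nm) (g : 'cV[C]_Nm) (Psi : 'M[C]_(Nd, Nm))
    (lmax lmin delta : C) :
  (0 < Nd)%N -> (Nd <= Nm)%N ->
  mx_hermitian Phi -> mx_posdef Phi ->
  eigenvalue Phi lmax -> (forall a, eigenvalue Phi a -> a <= lmax) ->
  eigenvalue Phi lmin -> (forall a, eigenvalue Phi a -> lmin <= a) ->
  g != 0 ->
  0 < delta < 1 ->
  (forall a, eigenvalue (Psi *m mxH Psi) a -> 1 - delta <= a <= 1 + delta) ->
  (1 - delta) * sqnorm g <= sqnorm (Psi *m g) <= (1 + delta) * sqnorm g ->
  let pM := p_MVDR Phi g in
  let pC := p_CMVDR Phi Psi g in
  let R := pC - pM in
  [/\ lmin / sqnorm g <= pM <= lmax / sqnorm g,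
      (1 - delta) * lmin / ((1 + delta) * sqnorm g) <= pC
        <= (1 + delta) * lmax / ((1 - delta) * sqnorm g)
    & (1 - delta) * lmin / ((1 + delta) * sqnorm g) - lmax / sqnorm g <= R
        <= (1 + delta) * lmax / ((1 - delta) * sqnorm g) - lmin / sqnorm g].
Proof.
move=> _ _ hPhi pdPhi Emax Hmax Emin Hmin gn0 /andP[d0 d1] HPsi /andP[hg1 hg2] pM pC R.
set s := sqnorm g in hg1 hg2 *.
have s0 : 0 < s := sqnorm_gt0 gn0.
have lmin0 : 0 < lmin := eig_pos hPhi pdPhi Emin.
have lmax0 : 0 < lmax := lt_le_trans lmin0 (Hmax _ Emin).
have hEPhi : forall e, eigenvalue Phi e -> lmin <= e <= lmax.
  by move=> e Ee; rewrite Hmin ?Hmax.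
have [Phiu hPhiI EPhiI] := inv_spec hPhi lmin0 hEPhi.
have qMb := rayleigh hPhiI EPhiI g.
have qM0 : 0 < quad (invmx Phi) g.
  case/andP: qMb => h _; apply: lt_le_trans h; by rewrite mulr_gt0 ?invr_gt0.
have pMb : lmin / s <= pM <= lmax / s.
  have li0 : 0 < lmax^-1 by rewrite invr_gt0.
  have := inv_bounds (mulr_gt0 li0 s0) qMb.
  by rewrite !invfM !invrK; apply.
set M := Psi *m Phi *m mxH Psi.
have hM : mxH M = M by rewrite /M !mxH_mul mxHK hPhi mulmxA.
set G := Psi *m mxH Psi.
have hG : mxH G = G by rewrite /G mxH_mul mxHK.
have qGb := rayleigh hG HPsi.
have qME : forall v, quad M v = quad Phi (mxH Psi *m v).
  by move=> v; rewrite /quad /M mxH_mul mxHK !mulmxA.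
have qGE : forall v, quad G v = sqnorm (mxH Psi *m v).
  by move=> v; rewrite /quad /sqnorm /G mxH_mul mxHK !mulmxA.
have d1m : 0 < 1 - delta by rewrite subr_gt0.
have d1p : 0 < 1 + delta by rewrite addr_gt0.
have hEM : forall e, eigenvalue M e -> lmin * (1 - delta) <= e <= lmax * (1 + delta).
  apply: eig_from_quad => // v; rewrite qME.
  have /andP [a1 a2] := rayleigh hPhi hEPhi (mxH Psi *m v).
  have /andP [b1 b2] := qGb v; rewrite qGE in b1 b2.
  apply/andP; split.
    apply: le_trans a1; rewrite -mulrA ler_wpM2l //; exact: ltW.
  apply: le_trans a2 _; rewrite -mulrA ler_wpM2l //; exact: ltW.
have c0 : 0 < lmin * (1 - delta) by rewrite mulr_gt0.
have [Mu hMI EMI] := inv_spec hM c0 hEM.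
have /andP [q1 q2] := rayleigh hMI EMI (Psi *m g).
have D0 : 0 < (lmax * (1 + delta))^-1 by rewrite invr_gt0 mulr_gt0.
have c0' : 0 < (lmin * (1 - delta))^-1 by rewrite invr_gt0.
have qCb : (lmax * (1 + delta))^-1 * ((1 - delta) * s) <= quad (invmx M) (Psi *m g)
        <= (lmin * (1 - delta))^-1 * ((1 + delta) * s).
  apply/andP; split.
    apply: le_trans q1; rewrite ler_wpM2l //; exact: ltW.
  apply: le_trans q2 _; rewrite ler_wpM2l //; exact: ltW.
have pCE : pC = (quad (invmx M) (Psi *m g))^-1.
  by rewrite /pC /p_CMVDR /quad mxH_mul !mulmxA.
have pCb : (1 - delta) * lmin / ((1 + delta) * s) <= pC
        <= (1 + delta) * lmax / ((1 - delta) * s).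
  have := inv_bounds (mulr_gt0 D0 (mulr_gt0 d1m s0)) qCb.
  rewrite pCE !invfM !invrK.
  by rewrite (mulrC lmin) (mulrC lmax) !mulrA.
split => //.
case/andP: pMb => m1 m2; case/andP: pCb => c1 c2.
by rewrite /R lerB // lerB.
Qed.
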